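(* Let $l,m$ be integers with $|l|>m>0$, let $d=\gcd(l,m)$ and write $l=l_1d$, $m=m_1d$. Let $h\in H(l,m)$ be written as $h=b^{p}v$ with $p\in\mathbb Z$ and $v\in L$. Let $r,s$ be integers. Then $h^{-1}a^{r}h=a^{s}$ holds if and only if $v\in C(a^{s})$ and one of the following holds: $p=0$ and $r=s$; or $p>0$ and $r=l_1^{p}dx$, $s=m_1^{p}dx$ for some integer $x$; or $p<0$ and $r=m_1^{-p}dx$, $s=l_1^{-p}dx$ for some integer $x$.
   Context: $H(l,m)=\langle a,b \mid b^{-1}a^{l}b=a^{m}\rangle$ (Baumslag–Solitar group). $L$ denotes the normal closure of $a$ in $H(l,m)$ (equivalently, the set of elements represented by words in $a,b$ with exponent sum $0$ in $b$); every element of $H(l,m)$ can be written uniquely as $b^p v$ with $p\in\mathbb Z$, $v\in L$. $C(h)$ denotes the centralizer of $h$ in $H(l,m)$. *)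

(* Defs.v *)
(* The Baumslag-Solitar group H(l,m) = < a, b | b^-1 a^l b = a^m >
   is modelled as the free monoid on the letters a, b, a^-1, b^-1 (words),
   modulo the smallest equivalence relation containing free cancellation and
   the defining relator, applied anywhere inside a word (this is exactly the
   congruence defining the presented group). *)
From Stdlib Require Import ZArith List Relation_Operators.
Import ListNotations.
Open Scope Z_scope.

Inductive gen : Type := Ga | Gb.

(* a letter: a generator together with a flag "is inverted" *)
Definition letter : Type := (gen * bool)%type.
Definition word : Type := list letter.

Definition inv_letter (x : letter) : letter := (fst x, negb (snd x)).

Definition winv (w : word) : word := rev (map inv_letter w).

Definition gpow (g : gen) (n : Z) : word :=
  if Z.leb 0 n then repeat (g, false) (Z.to_nat n)
  else repeat (g, true) (Z.to_nat (- n)).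

Inductive bs_step (l m : Z) : word -> word -> Prop :=
| bs_free : forall (u v : word) (x : letter),
    bs_step l m (u ++ x :: inv_letter x :: v) (u ++ v)
| bs_rel : forall u v : word,
    bs_step l m (u ++ (Gb, true) :: gpow Ga l ++ (Gb, false) :: v)
                (u ++ gpow Ga m ++ v).

Definition bs_eq (l m : Z) : word -> word -> Prop :=
  clos_refl_sym_trans word (bs_step l m).

Definition letter_bexp (x : letter) : Z :=
  match x with
  | (Gb, false) => 1
  | (Gb, true) => -1
  | (Ga, _) => 0
  end.
Definition bexp (w : word) : Z := fold_right (fun x acc => letter_bexp x + acc) 0 w.
Definition in_L (w : word) : Prop := bexp w = 0.

Definition in_centralizer (l m : Z) (g v : word) : Prop :=
  bs_eq l m (v ++ g) (g ++ v).

(* Main.v *)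
Require Import Defs.
From Stdlib Require Import ZArith List Lia Relation_Operators Setoid QArith Qfield Qpower Znumtheory Zpow_facts.
Import ListNotations.
Open Scope Z_scope.



Lemma beq_refl l m w : bs_eq l m w w. Proof. apply rst_refl. Qed.
Lemma beq_sym l m w1 w2 : bs_eq l m w1 w2 -> bs_eq l m w2 w1. Proof. apply rst_sym. Qed.
Lemma beq_trans l m w1 w2 w3 : bs_eq l m w1 w2 -> bs_eq l m w2 w3 -> bs_eq l m w1 w3.
Proof. apply rst_trans. Qed.

Lemma step_ctx l m x y u w : bs_step l m x y -> bs_step l m (u ++ x ++ w) (u ++ y ++ w).
Proof.
  intros H; destruct H as [u0 v0 c|u0 v0].
  - replace (u ++ (u0 ++ c :: inv_letter c :: v0) ++ w) with ((u ++ u0) ++ c :: inv_letter c :: (v0 ++ w))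
      by (rewrite <- !app_assoc; reflexivity).
    replace (u ++ (u0 ++ v0) ++ w) with ((u ++ u0) ++ (v0 ++ w)) by (rewrite <- !app_assoc; reflexivity).
    constructor.
  - replace (u ++ (u0 ++ (Gb, true) :: gpow Ga l ++ (Gb, false) :: v0) ++ w) with
      ((u ++ u0) ++ (Gb, true) :: gpow Ga l ++ (Gb, false) :: (v0 ++ w))
      by (rewrite <- !app_assoc; simpl; rewrite <- !app_assoc; reflexivity).
    replace (u ++ (u0 ++ gpow Ga m ++ v0) ++ w) with ((u ++ u0) ++ gpow Ga m ++ (v0 ++ w))
      by (rewrite <- !app_assoc; reflexivity).
    constructor.
Qed.

Lemma beq_ctx l m x y u w : bs_eq l m x y -> bs_eq l m (u ++ x ++ w) (u ++ y ++ w).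
Proof.
  intros H; induction H.
  - apply rst_step, step_ctx; auto.
  - apply beq_refl.
  - apply beq_sym; auto.
  - eapply beq_trans; eauto.
Qed.

Lemma beq_app l m x y x' y' : bs_eq l m x y -> bs_eq l m x' y' -> bs_eq l m (x ++ x') (y ++ y').
Proof.
  intros H1 H2. apply beq_trans with (y ++ x').
  - pose proof (beq_ctx l m x y [] x' H1) as H; simpl in H; exact H.
  - pose proof (beq_ctx l m x' y' y [] H2) as H; rewrite !app_nil_r in H; exact H.
Qed.

Lemma winv_cons x w : winv (x :: w) = winv w ++ [inv_letter x].
Proof. reflexivity. Qed.
Lemma winv_app u w : winv (u ++ w) = winv w ++ winv u.
Proof. unfold winv. rewrite map_app, rev_app_distr. reflexivity. Qed.
Lemma inv_inv x : inv_letter (inv_letter x) = x.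
Proof. destruct x as [g b]; unfold inv_letter; simpl; rewrite Bool.negb_involutive; reflexivity. Qed.
Lemma winv_winv w : winv (winv w) = w.
Proof.
  induction w as [|x w IH]; [reflexivity|].
  rewrite winv_cons, winv_app, IH. simpl. rewrite inv_inv. reflexivity.
Qed.

Lemma free2 l m x : bs_eq l m [x; inv_letter x] [].
Proof. apply rst_step. pose proof (bs_free l m [] [] x) as H; simpl in H; exact H. Qed.

Lemma cancel_r l m w : bs_eq l m (w ++ winv w) [].
Proof.
  induction w as [|x w IH]; [apply beq_refl|].
  rewrite winv_cons. 
  replace ((x :: w) ++ winv w ++ [inv_letter x]) with ([x] ++ (w ++ winv w) ++ [inv_letter x])
    by (simpl; rewrite app_assoc; reflexivity).
  eapply beq_trans. apply beq_ctx, IH. simpl. apply free2.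
Qed.

Lemma cancel_l l m w : bs_eq l m (winv w ++ w) [].
Proof. pose proof (cancel_r l m (winv w)) as H; rewrite winv_winv in H; exact H. Qed.

Lemma beq_winv l m x y : bs_eq l m x y -> bs_eq l m (winv x) (winv y).
Proof.
  intros H.
  apply beq_trans with (winv x ++ y ++ winv y).
  { pose proof (beq_app l m (winv x) (winv x) _ _ (beq_refl _ _ _) (beq_sym _ _ _ _ (cancel_r l m y))) as H1.
    rewrite app_nil_r in H1. exact H1. }
  apply beq_trans with (winv x ++ x ++ winv y).
  { apply beq_ctx with (u := winv x) (w := winv y). apply beq_sym; exact H. }
  rewrite app_assoc.
  pose proof (beq_app l m _ _ (winv y) (winv y) (cancel_l l m x) (beq_refl _ _ _)) as H1.
  simpl in H1; exact H1.
Qed.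

Lemma gpow_opp g n : gpow g (- n) = winv (gpow g n).
Proof.
  unfold gpow, winv.
  assert (Hr : forall b k, rev (map inv_letter (repeat (g, b) k)) = repeat (g, negb b) k).
  { intros b k. rewrite map_repeat, rev_repeat. reflexivity. }
  destruct (Z.leb_spec 0 n) as [H|H]; destruct (Z.leb_spec 0 (- n)) as [H'|H'].
  - assert (n = 0) by lia; subst. reflexivity.
  - rewrite Hr. simpl. rewrite Z.opp_involutive. reflexivity.
  - rewrite Hr. reflexivity.
  - lia.
Qed.

Lemma gpow_succ l m g n : bs_eq l m (gpow g (n + 1)) (gpow g n ++ [(g, false)]).
Proof.
  unfold gpow.
  destruct (Z.leb_spec 0 n) as [H|H].
  - destruct (Z.leb_spec 0 (n + 1)) as [_|H']; [|lia].
    replace (Z.to_nat (n + 1)) with (Z.to_nat n + 1)%nat by lia.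
    rewrite repeat_app. apply beq_refl.
  - destruct (Z.leb_spec 0 (n + 1)) as [H'|H'].
    + assert (n = -1) by lia; subst. simpl. apply beq_sym, free2.
    + replace (Z.to_nat (- n)) with (Z.to_nat (- (n + 1)) + 1)%nat by lia.
      rewrite repeat_app. simpl. rewrite <- app_assoc. simpl.
      pose proof (beq_ctx l m [(g,true); (g,false)] [] (repeat (g, true) (Z.to_nat (- (n + 1)))) []
                   (free2 l m (g,true))) as Hc.
      rewrite !app_nil_r in Hc. apply beq_sym. exact Hc.
Qed.

Lemma gpow_pred l m g n : bs_eq l m (gpow g (n - 1)) (gpow g n ++ [(g, true)]).
Proof.
  unfold gpow.
  destruct (Z.leb_spec 0 (n - 1)) as [H|H].
  - destruct (Z.leb_spec 0 n) as [_|H']; [|lia].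
    replace (Z.to_nat n) with (Z.to_nat (n - 1) + 1)%nat by lia.
    rewrite repeat_app. simpl. rewrite <- app_assoc. simpl.
    pose proof (beq_ctx l m [(g,false); (g,true)] [] (repeat (g, false) (Z.to_nat (n - 1))) []
                   (free2 l m (g,false))) as Hc.
    rewrite !app_nil_r in Hc. apply beq_sym. exact Hc.
  - destruct (Z.leb_spec 0 n) as [H'|H'].
    + assert (n = 0) by lia; subst. simpl. apply beq_refl.
    + replace (Z.to_nat (- (n - 1))) with (Z.to_nat (- n) + 1)%nat by lia.
      rewrite repeat_app. apply beq_refl.
Qed.

Lemma gpow_add l m g n k : bs_eq l m (gpow g (n + k)) (gpow g n ++ gpow g k).
Proof.
  induction k using Z.peano_ind.
  - rewrite Z.add_0_r. simpl. rewrite app_nil_r. apply beq_refl.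
  - rewrite <- Z.add_1_r. replace (n + (k + 1)) with ((n + k) + 1) by ring.
    eapply beq_trans. apply gpow_succ.
    eapply beq_trans. apply beq_app. exact IHk. apply beq_refl.
    rewrite <- app_assoc. apply beq_app. apply beq_refl. apply beq_sym, gpow_succ.
  - rewrite <- Z.sub_1_r. replace (n + (k - 1)) with ((n + k) - 1) by ring.
    eapply beq_trans. apply gpow_pred.
    eapply beq_trans. apply beq_app. exact IHk. apply beq_refl.
    rewrite <- app_assoc. apply beq_app. apply beq_refl. apply beq_sym, gpow_pred.
Qed.

Definition cb (w : word) : word := (Gb,true) :: w ++ [(Gb,false)].
Definition cb' (w : word) : word := (Gb,false) :: w ++ [(Gb,true)].

Lemma cb_beq l m x y : bs_eq l m x y -> bs_eq l m (cb x) (cb y).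
Proof. intros H. unfold cb. apply (beq_ctx l m x y [(Gb,true)] [(Gb,false)] H). Qed.
Lemma cb'_beq l m x y : bs_eq l m x y -> bs_eq l m (cb' x) (cb' y).
Proof. intros H. unfold cb'. apply (beq_ctx l m x y [(Gb,false)] [(Gb,true)] H). Qed.

Lemma cb_app l m u w : bs_eq l m (cb (u ++ w)) (cb u ++ cb w).
Proof.
  unfold cb. simpl. rewrite <- !app_assoc. simpl.
  apply (beq_ctx l m [] [(Gb,false); (Gb,true)] ((Gb,true) :: u) (w ++ [(Gb,false)])).
  apply beq_sym. apply (free2 l m (Gb,false)).
Qed.

Lemma cb'_cb l m w : bs_eq l m (cb' (cb w)) w.
Proof.
  unfold cb, cb'. simpl. rewrite <- !app_assoc. simpl.
  pose proof (beq_ctx l m [(Gb,false);(Gb,true)] [] [] (w ++ [(Gb,false);(Gb,true)]) (free2 l m (Gb,false))) as H.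
  simpl in H. eapply beq_trans. exact H.
  pose proof (beq_ctx l m [(Gb,false);(Gb,true)] [] w [] (free2 l m (Gb,false))) as H2.
  simpl in H2. rewrite app_nil_r in H2. exact H2.
Qed.

Lemma cb_winv w : cb (winv w) = winv (cb w).
Proof. unfold cb. rewrite winv_cons, winv_app. reflexivity. Qed.

Lemma cb_rel l m : bs_eq l m (cb (gpow Ga l)) (gpow Ga m).
Proof.
  apply rst_step. pose proof (bs_rel l m [] []) as H. simpl in H. rewrite app_nil_r in H.
  unfold cb. exact H.
Qed.

Lemma cb_rel_opp l m : bs_eq l m (cb (gpow Ga (- l))) (gpow Ga (- m)).
Proof.
  rewrite !gpow_opp, cb_winv. apply beq_winv, cb_rel.
Qed.

Lemma cb_pow l m x : bs_eq l m (cb (gpow Ga (l * x))) (gpow Ga (m * x)).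
Proof.
  induction x using Z.peano_ind.
  - rewrite !Z.mul_0_r. simpl. unfold cb. simpl. apply (free2 l m (Gb,true)).
  - rewrite Z.mul_succ_r, Z.mul_succ_r.
    eapply beq_trans. apply cb_beq, gpow_add.
    eapply beq_trans. apply cb_app.
    eapply beq_trans. apply beq_app. exact IHx. apply cb_rel.
    apply beq_sym, gpow_add.
  - rewrite Z.mul_pred_r, Z.mul_pred_r. rewrite <- !Z.add_opp_r.
    eapply beq_trans. apply cb_beq, gpow_add.
    eapply beq_trans. apply cb_app.
    eapply beq_trans. apply beq_app. exact IHx. apply cb_rel_opp.
    apply beq_sym, gpow_add.
Qed.

Lemma cb'_pow l m x : bs_eq l m (cb' (gpow Ga (m * x))) (gpow Ga (l * x)).
Proof.
  eapply beq_trans. apply cb'_beq, beq_sym, cb_pow. apply cb'_cb.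
Qed.

Lemma gpow_neg_S g n : gpow g (- Z.of_nat (S n)) = (g,true) :: gpow g (- Z.of_nat n).
Proof.
  unfold gpow. destruct n.
  - reflexivity.
  - destruct (Z.leb_spec 0 (- Z.of_nat (S (S n)))); [lia|].
    destruct (Z.leb_spec 0 (- Z.of_nat (S n))); [lia|].
    rewrite !Z.opp_involutive, !Nat2Z.id. reflexivity.
Qed.

Lemma gpow_pos_S g n : gpow g (Z.of_nat (S n)) = gpow g (Z.of_nat n) ++ [(g,false)].
Proof.
  unfold gpow.
  destruct (Z.leb_spec 0 (Z.of_nat (S n))); [|lia].
  destruct (Z.leb_spec 0 (Z.of_nat n)); [|lia].
  rewrite !Nat2Z.id. rewrite <- repeat_cons. reflexivity.
Qed.

Lemma gpow_pos_S' g n : gpow g (Z.of_nat (S n)) = (g,false) :: gpow g (Z.of_nat n).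
Proof.
  unfold gpow.
  destruct (Z.leb_spec 0 (Z.of_nat (S n))); [|lia].
  destruct (Z.leb_spec 0 (Z.of_nat n)); [|lia].
  rewrite !Nat2Z.id. reflexivity.
Qed.

Lemma gpow_neg_S' g n : gpow g (- Z.of_nat (S n)) = gpow g (- Z.of_nat n) ++ [(g,true)].
Proof.
  rewrite gpow_neg_S. unfold gpow. destruct n.
  - reflexivity.
  - destruct (Z.leb_spec 0 (- Z.of_nat (S n))); [lia|].
    rewrite !Z.opp_involutive, !Nat2Z.id. apply repeat_cons.
Qed.

Lemma cb_eq (A B C : word) : ((Gb,true)::A) ++ B ++ C ++ [(Gb,false)] = cb (A ++ B ++ C).
Proof. unfold cb; simpl; rewrite <- !app_assoc; reflexivity. Qed.
Lemma cb'_eq (A B C : word) : ((Gb,false)::A) ++ B ++ C ++ [(Gb,true)] = cb' (A ++ B ++ C).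
Proof. unfold cb'; simpl; rewrite <- !app_assoc; reflexivity. Qed.

Lemma bs_iter_pos l m l1 m1 d (Hl : l = l1 * d) (Hmm : m = m1 * d) n : forall x,
  bs_eq l m (gpow Gb (- Z.of_nat n) ++ gpow Ga (l1 ^ Z.of_nat n * d * x) ++ gpow Gb (Z.of_nat n))
            (gpow Ga (m1 ^ Z.of_nat n * d * x)).
Proof.
  induction n as [|n IH]; intros x.
  - simpl. rewrite app_nil_r. apply beq_refl.
  - rewrite gpow_neg_S, gpow_pos_S.
    replace (l1 ^ Z.of_nat (S n) * d * x) with (l1 ^ Z.of_nat n * d * (l1 * x))
      by (rewrite Nat2Z.inj_succ, Z.pow_succ_r by lia; ring).
    rewrite cb_eq.
    eapply beq_trans. apply cb_beq, IH.
    replace (m1 ^ Z.of_nat n * d * (l1 * x)) with (l * (m1 ^ Z.of_nat n * x)) by (subst; ring).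
    eapply beq_trans. apply cb_pow.
    replace (m * (m1 ^ Z.of_nat n * x)) with (m1 ^ Z.of_nat (S n) * d * x)
      by (rewrite Nat2Z.inj_succ, Z.pow_succ_r by lia; subst; ring).
    apply beq_refl.
Qed.

Lemma bs_iter_neg l m l1 m1 d (Hl : l = l1 * d) (Hmm : m = m1 * d) n : forall x,
  bs_eq l m (gpow Gb (Z.of_nat n) ++ gpow Ga (m1 ^ Z.of_nat n * d * x) ++ gpow Gb (- Z.of_nat n))
            (gpow Ga (l1 ^ Z.of_nat n * d * x)).
Proof.
  induction n as [|n IH]; intros x.
  - simpl. rewrite app_nil_r. apply beq_refl.
  - rewrite gpow_neg_S', gpow_pos_S'.
    replace (m1 ^ Z.of_nat (S n) * d * x) with (m1 ^ Z.of_nat n * d * (m1 * x))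
      by (rewrite Nat2Z.inj_succ, Z.pow_succ_r by lia; ring).
    rewrite cb'_eq.
    eapply beq_trans. apply cb'_beq, IH.
    replace (l1 ^ Z.of_nat n * d * (m1 * x)) with (m * (l1 ^ Z.of_nat n * x)) by (subst; ring).
    eapply beq_trans. apply cb'_pow.
    replace (l * (l1 ^ Z.of_nat n * x)) with (l1 ^ Z.of_nat (S n) * d * x)
      by (rewrite Nat2Z.inj_succ, Z.pow_succ_r by lia; subst; ring).
    apply beq_refl.
Qed.

Definition sem {X : Type} (act : letter -> X -> X) (w : word) (x : X) : X := fold_right act x w.

Lemma sem_app {X} (act : letter -> X -> X) u w x : sem act (u ++ w) x = sem act u (sem act w x).
Proof. unfold sem. apply fold_right_app. Qed.

Lemma sem_invariant {X : Type} (eqv : X -> X -> Prop) (act : letter -> X -> X) (l m : Z)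
  (Hrefl : forall x, eqv x x)
  (Hsym : forall x y, eqv x y -> eqv y x)
  (Htrans : forall x y z, eqv x y -> eqv y z -> eqv x z)
  (Hprop : forall c s1 s2, eqv s1 s2 -> eqv (act c s1) (act c s2))
  (Hfree : forall c s, eqv (act c (act (inv_letter c) s)) s)
  (Hrel : forall s, eqv (act (Gb,true) (sem act (gpow Ga l) (act (Gb,false) s))) (sem act (gpow Ga m) s)) :
  forall w1 w2, bs_eq l m w1 w2 -> forall s, eqv (sem act w1 s) (sem act w2 s).
Proof.
  assert (Hp : forall w s1 s2, eqv s1 s2 -> eqv (sem act w s1) (sem act w s2)).
  { induction w as [|c w IH]; intros s1 s2 H; simpl; auto. }
  intros w1 w2 H. induction H as [x y H| | |]; intros s0.
  - destruct H as [u v c|u v].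
    + rewrite !sem_app. apply Hp. simpl. apply Hfree.
    + rewrite !sem_app. apply Hp. simpl. rewrite sem_app. simpl. apply Hrel.
  - apply Hrefl.
  - apply Hsym; auto.
  - eapply Htrans; eauto.
Qed.

Lemma bexp_cons c w : bexp (c :: w) = letter_bexp c + bexp w.
Proof. reflexivity. Qed.
Lemma bexp_app u w : bexp (u ++ w) = bexp u + bexp w.
Proof. induction u as [|c u IH]; [reflexivity|]. simpl app. rewrite !bexp_cons, IH. ring. Qed.

Lemma bexp_gpow_b p : bexp (gpow Gb p) = p.
Proof.
  assert (Hr : forall b k, bexp (repeat (Gb, b) k) = (if b then - Z.of_nat k else Z.of_nat k)).
  { intros b k; induction k as [|k IH]; [destruct b; reflexivity|].
    simpl repeat. rewrite bexp_cons, IH. destruct b; simpl letter_bexp; lia. }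
  unfold gpow. destruct (Z.leb_spec 0 p); rewrite Hr; lia.
Qed.

Definition lam (l m : Z) : Q := (inject_Z l / inject_Z m)%Q.

Definition Qact (l m : Z) (c : letter) (q : Q) : Q :=
  match c with
  | (Ga, false) => (q + 1)%Q
  | (Ga, true) => (q - 1)%Q
  | (Gb, false) => (q * lam l m)%Q
  | (Gb, true) => (q / lam l m)%Q
  end.

Lemma Qact_proper l m c q1 q2 : (q1 == q2)%Q -> (Qact l m c q1 == Qact l m c q2)%Q.
Proof. intros H. destruct c as [[|] [|]]; simpl; rewrite H; reflexivity. Qed.

Add Parametric Morphism l m c : (Qact l m c) with signature Qeq ==> Qeq as Qact_mor.
Proof. intros; apply Qact_proper; auto. Qed.

Lemma Qsem_rep l m b k q :
  (sem (Qact l m) (repeat (Ga, b) k) q == q + inject_Z (if b then - Z.of_nat k else Z.of_nat k))%Q.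
Proof.
  induction k as [|k IH].
  - destruct b; simpl; ring.
  - simpl repeat. unfold sem in *. simpl fold_right.
    destruct b; simpl Qact; rewrite IH; rewrite Nat2Z.inj_succ;
      [rewrite Z.opp_succ, <- Z.sub_1_r, <- Z.add_opp_r | rewrite <- Z.add_1_r];
      unfold Qminus; rewrite ?inject_Z_plus, ?inject_Z_opp; simpl; ring.
Qed.

Lemma Qsem_apow l m k q : (sem (Qact l m) (gpow Ga k) q == q + inject_Z k)%Q.
Proof.
  unfold gpow. destruct (Z.leb_spec 0 k).
  - rewrite Qsem_rep. rewrite Z2Nat.id by lia. reflexivity.
  - rewrite Qsem_rep. rewrite Z2Nat.id by lia. rewrite Z.opp_involutive. reflexivity.
Qed.

Lemma lam_nz l m : l <> 0 -> m <> 0 -> ~ (lam l m == 0)%Q.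
Proof.
  intros Hl Hm H. unfold lam in H.
  assert (HL : ~ (inject_Z l == 0)%Q) by (rewrite <- (inject_Z_injective l 0) in Hl; exact Hl).
  assert (HM : ~ (inject_Z m == 0)%Q) by (rewrite <- (inject_Z_injective m 0) in Hm; exact Hm).
  apply HL. assert (E : (inject_Z l == (inject_Z l / inject_Z m) * inject_Z m)%Q) by (field; auto).
  rewrite E, H. ring.
Qed.



Lemma Qsem_affine l m (Hl : l <> 0) (Hm : m <> 0) w :
  exists beta, forall q, (sem (Qact l m) w q == Qpower (lam l m) (bexp w) * q + beta)%Q.
Proof.
  pose proof (lam_nz l m Hl Hm) as Hnz.
  induction w as [|c w [beta IH]].
  - exists 0%Q. intros q. simpl. ring.
  - rewrite bexp_cons.
    destruct c as [[|] [|]]; simpl letter_bexp; unfold sem in *; simpl fold_right.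
    + exists (beta - 1)%Q. intros q. cbn [Qact]. rewrite (IH q). rewrite ?Z.add_0_l. ring.
    + exists (beta + 1)%Q. intros q. cbn [Qact]. rewrite (IH q). rewrite ?Z.add_0_l. ring.
    + exists (beta / lam l m)%Q. intros q. cbn [Qact]. rewrite (IH q). rewrite ?Z.add_0_l.
      rewrite Qpower_plus by exact Hnz. change (Qpower (lam l m) (-1)) with (/ (lam l m) ^ 1)%Q.
      simpl. field. exact Hnz.
    + exists (beta * lam l m)%Q. intros q. cbn [Qact]. rewrite (IH q). rewrite ?Z.add_0_l.
      rewrite Qpower_plus by exact Hnz. simpl. field.
Qed.

Lemma Q_invariant l m (Hl : l <> 0) (Hm : m <> 0) w1 w2 :
  bs_eq l m w1 w2 -> forall q, (sem (Qact l m) w1 q == sem (Qact l m) w2 q)%Q.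
Proof.
  pose proof (lam_nz l m Hl Hm) as Hnz.
  apply sem_invariant.
  - intros; reflexivity.
  - intros; symmetry; auto.
  - intros x y z H1 H2; rewrite H1; exact H2.
  - apply Qact_proper.
  - intros [[|] [|]] q; simpl; try ring. field; exact Hnz. field; exact Hnz.
  - intros q. simpl. rewrite Qsem_apow, Qsem_apow. unfold lam. field.
    split.
    + intros H; apply Hm; apply (proj1 (inject_Z_injective m 0)); exact H.
    + intros H; apply Hl; apply (proj1 (inject_Z_injective l 0)); exact H.
Qed.

Lemma Q_conj l m (Hl : l <> 0) (Hm : m <> 0) h r s :
  bs_eq l m (gpow Ga r ++ h) (h ++ gpow Ga s) ->
  (inject_Z r == Qpower (lam l m) (bexp h) * inject_Z s)%Q.
Proof.
  intros H. pose proof (Q_invariant l m Hl Hm _ _ H 0%Q) as E.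
  rewrite !sem_app in E. rewrite Qsem_apow in E.
  destruct (Qsem_affine l m Hl Hm h) as [beta Hb].
  rewrite !Hb in E. rewrite Qsem_apow in E.
  assert (E2 : (inject_Z r == Qpower (lam l m) (bexp h) * (0 + inject_Z s) + beta - (Qpower (lam l m) (bexp h) * 0 + beta))%Q)
    by (rewrite <- E; ring).
  rewrite E2. ring.
Qed.

Definition St : Type := ((Z -> Z) * Z)%type.

Definition Wact (c : letter) (st : St) : St :=
  match c with
  | (Ga, false) => (fun i => if Z.eqb i (snd st) then fst st i + 1 else fst st i, snd st)
  | (Ga, true) => (fun i => if Z.eqb i (snd st) then fst st i - 1 else fst st i, snd st)
  | (Gb, false) => (fst st, snd st + 1)
  | (Gb, true) => (fst st, snd st - 1)
  end.

Definition weqv (d : Z) (s1 s2 : St) : Prop :=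
  snd s1 = snd s2 /\ forall i, (d | fst s1 i - fst s2 i).

Lemma Wsem_rep b k f n :
  snd (sem Wact (repeat (Ga, b) k) (f, n)) = n /\
  forall i, fst (sem Wact (repeat (Ga, b) k) (f, n)) i =
    if Z.eqb i n then f i + (if b then - Z.of_nat k else Z.of_nat k) else f i.
Proof.
  induction k as [|k [IH1 IH2]].
  - split; [reflexivity|]. intros i. destruct (Z.eqb i n); destruct b; simpl; ring.
  - simpl repeat. unfold sem in *. simpl fold_right.
    destruct b; cbn [Wact fst snd]; rewrite IH1; (split; [reflexivity|]); intros i;
      rewrite IH2; destruct (Z.eqb i n); lia.
Qed.

Lemma Wsem_apow k f n :
  snd (sem Wact (gpow Ga k) (f, n)) = n /\
  forall i, fst (sem Wact (gpow Ga k) (f, n)) i = if Z.eqb i n then f i + k else f i.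
Proof.
  unfold gpow. destruct (Z.leb_spec 0 k).
  - destruct (Wsem_rep false (Z.to_nat k) f n) as [H1 H2].
    split; [apply H1|]; intros i; rewrite H2; destruct (Z.eqb i n); lia.
  - destruct (Wsem_rep true (Z.to_nat (- k)) f n) as [H1 H2].
    split; [apply H1|]; intros i; rewrite H2; destruct (Z.eqb i n); lia.
Qed.

Lemma W_invariant l m d (Hdl : (d | l)) (Hdm : (d | m)) w1 w2 :
  bs_eq l m w1 w2 -> forall st, weqv d (sem Wact w1 st) (sem Wact w2 st).
Proof.
  apply sem_invariant.
  - intros [f n]; split; [reflexivity|]; intros i; rewrite Z.sub_diag; apply Z.divide_0_r.
  - intros x y [H1 H2]; split; [auto|]; intros i; specialize (H2 i).
    replace (fst y i - fst x i) with (- (fst x i - fst y i)) by ring. apply Z.divide_opp_r; auto.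
  - intros x y z [H1 H2] [H3 H4]; split; [congruence|]; intros i.
    replace (fst x i - fst z i) with ((fst x i - fst y i) + (fst y i - fst z i)) by ring.
    apply Z.divide_add_r; auto.
  - intros c [f1 n1] [f2 n2] [Hn Hf]; simpl in Hn, Hf; subst n2.
    destruct c as [[|] [|]]; split; simpl; auto; intros i; specialize (Hf i);
      destruct (Z.eqb i n1); auto;
      [replace (f1 i - 1 - (f2 i - 1)) with (f1 i - f2 i) by ring
      |replace (f1 i + 1 - (f2 i + 1)) with (f1 i - f2 i) by ring]; auto.
  - intros c [f n]. destruct c as [[|] [|]]; split; simpl; try lia; intros i;
      try (rewrite Z.sub_diag; apply Z.divide_0_r).
    + destruct (Z.eqb i n); [replace (f i + 1 - 1 - f i) with 0 by ring|rewrite Z.sub_diag]; apply Z.divide_0_r.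
    + destruct (Z.eqb i n); [replace (f i - 1 + 1 - f i) with 0 by ring|rewrite Z.sub_diag]; apply Z.divide_0_r.
  - intros [f n]. cbn [Wact fst snd].
    destruct (Wsem_apow l f (n + 1)) as [A1 A2].
    destruct (Wsem_apow m f n) as [B1 B2].
    split; cbn [fst snd].
    + rewrite A1, B1. ring.
    + intros i. rewrite A2, B2.
      destruct (Z.eqb_spec i (n + 1)); destruct (Z.eqb_spec i n); try lia.
      * replace (f i + l - f i) with l by ring. auto.
      * replace (f i - (f i + m)) with (- m) by ring. apply Z.divide_opp_r; auto.
      * rewrite Z.sub_diag; apply Z.divide_0_r.
Qed.

Lemma W_struct d w : exists g : Z -> Z, forall f n,
  weqv d (sem Wact w (f, n)) (fun i => f i + g (i - n), n + bexp w).
Proof.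
  induction w as [|c w [g IH]].
  - exists (fun _ => 0). intros f n. split; simpl; [ring|]. intros i.
    replace (f i - (f i + 0)) with 0 by ring. apply Z.divide_0_r.
  - intros. rewrite bexp_cons.
    destruct c as [[|] [|]].
    + exists (fun j => if Z.eqb j (bexp w) then g j - 1 else g j). intros f n.
      destruct (IH f n) as [H1 H2]. unfold sem in *. simpl fold_right.
      remember (fold_right Wact (f, n) w) as X. destruct X as [F N]. cbn [Wact fst snd] in H1, H2 |- *.
      split; cbn [fst snd letter_bexp]; [lia|]. intros i. specialize (H2 i).
      destruct (Z.eqb_spec i N); destruct (Z.eqb_spec (i - n) (bexp w)); try lia.
      * replace (F i - 1 - (f i + (g (i - n) - 1))) with (F i - (f i + g (i - n))) by ring. auto.
      * auto.
    + exists (fun j => if Z.eqb j (bexp w) then g j + 1 else g j). intros f n.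
      destruct (IH f n) as [H1 H2]. unfold sem in *. simpl fold_right.
      remember (fold_right Wact (f, n) w) as X. destruct X as [F N]. cbn [Wact fst snd] in H1, H2 |- *.
      split; cbn [fst snd letter_bexp]; [lia|]. intros i. specialize (H2 i).
      destruct (Z.eqb_spec i N); destruct (Z.eqb_spec (i - n) (bexp w)); try lia.
      * replace (F i + 1 - (f i + (g (i - n) + 1))) with (F i - (f i + g (i - n))) by ring. auto.
      * auto.
    + exists g. intros f n.
      destruct (IH f n) as [H1 H2]. unfold sem in *. simpl fold_right.
      remember (fold_right Wact (f, n) w) as X. destruct X as [F N]. cbn [Wact fst snd] in H1, H2 |- *.
      split; cbn [fst snd letter_bexp]; [lia|]. auto.
    + exists g. intros f n.
      destruct (IH f n) as [H1 H2]. unfold sem in *. simpl fold_right.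
      remember (fold_right Wact (f, n) w) as X. destruct X as [F N]. cbn [Wact fst snd] in H1, H2 |- *.
      split; cbn [fst snd letter_bexp]; [lia|]. auto.
Qed.

Lemma W_conj l m d (Hdl : (d | l)) (Hdm : (d | m)) h r s :
  bexp h <> 0 ->
  bs_eq l m (gpow Ga r ++ h) (h ++ gpow Ga s) -> (d | r) /\ (d | s).
Proof.
  intros Hp H.
  pose proof (W_invariant l m d Hdl Hdm _ _ H (fun _ => 0, 0)) as [E1 E2].
  rewrite !sem_app in E1, E2.
  destruct (W_struct d h) as [g Hg].
  destruct (Hg (fun _ => 0) 0) as [A1 A2].
  remember (sem Wact h (fun _ => 0, 0)) as X. destruct X as [F N]. simpl in A1, A2.
  destruct (Wsem_apow r F N) as [_ B2].
  destruct (Wsem_apow s (fun _ => 0) 0) as [C1 C2].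
  remember (sem Wact (gpow Ga s) (fun _ => 0, 0)) as Y. destruct Y as [G M]. simpl in C1, C2. subst M.
  destruct (Hg G 0) as [D1 D2].
  remember (sem Wact h (G, 0)) as Z'. destruct Z' as [K P]. simpl in D1, D2.
  split.
  - specialize (E2 N). rewrite B2 in E2. simpl in E2. rewrite Z.eqb_refl in E2.
    specialize (A2 N). specialize (D2 N). rewrite C2 in D2.
    destruct (Z.eqb_spec N 0); [lia|].
    replace r with ((F N + r - K N) - (F N - (0 + g (N - 0))) + (K N - (0 + g (N - 0)))) by ring.
    apply Z.divide_add_r; [apply Z.divide_sub_r|]; auto.
  - specialize (E2 0). rewrite B2 in E2.
    assert (Hf : (0 =? N) = false) by (apply Z.eqb_neq; lia). rewrite Hf in E2.
    specialize (A2 0). specialize (D2 0). rewrite C2 in D2. simpl in D2.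
    replace s with (- ((F 0 - K 0) - (F 0 - (0 + g (0 - 0))) + (K 0 - (0 + s + g (0 - 0))))) by ring.
    apply Z.divide_opp_r.
    apply Z.divide_add_r; [apply Z.divide_sub_r|]; auto.
Qed.

Lemma arith A B A1 B1 d n r s : 0 <= n -> 0 < d -> A = A1 * d -> B = B1 * d ->
  Z.gcd A1 B1 = 1 -> A1 <> 0 -> r * B ^ n = s * A ^ n -> (d | r) -> (d | s) ->
  exists x, r = A1 ^ n * d * x /\ s = B1 ^ n * d * x.
Proof.
  intros Hn Hd HA HB Hg HA1 E Hr Hs. subst A B.
  rewrite !Z.pow_mul_l in E.
  assert (Hdn : d ^ n <> 0) by (apply Z.pow_nonzero; lia).
  assert (Hpn : A1 ^ n <> 0) by (apply Z.pow_nonzero; lia).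
  assert (E2 : r * B1 ^ n = s * A1 ^ n).
  { apply (Z.mul_cancel_r _ _ (d ^ n)); auto. rewrite <- !Z.mul_assoc. exact E. }
  assert (Hrp : rel_prime (A1 ^ n) (B1 ^ n)).
  { apply rel_prime_Zpower; auto. apply Zgcd_1_rel_prime; auto. }
  assert (Hg2 : Z.gcd (A1 ^ n) (B1 ^ n) = 1) by (apply Zgcd_1_rel_prime; auto).
  assert (Hdiv : (A1 ^ n | r)).
  { apply Z.gauss with (B1 ^ n); auto. exists s. rewrite Z.mul_comm, E2. ring. }
  destruct Hdiv as [y Hy].
  assert (Hsy : s = y * B1 ^ n).
  { apply (Z.mul_cancel_r _ _ (A1 ^ n)); auto. rewrite <- E2, Hy. ring. }
  destruct (rel_prime_bezout _ _ Hrp) as [u w Hb].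
  assert (Hyd : (d | y)).
  { replace y with (u * r + w * s).
    - apply Z.divide_add_r; apply Z.divide_mul_r; auto.
    - rewrite Hy, Hsy. rewrite <- (Z.mul_1_r y) at 3. rewrite <- Hb. ring. }
  destruct Hyd as [x Hx]. exists x. split.
  - rewrite Hy, Hx. ring.
  - rewrite Hsy, Hx. ring.
Qed.

Lemma conj_reduce l m v K s : bs_eq l m K (gpow Ga s) ->
  (bs_eq l m (winv v ++ K ++ v) (gpow Ga s) <-> in_centralizer l m (gpow Ga s) v).
Proof.
  intros HK. unfold in_centralizer.
  assert (E : bs_eq l m (winv v ++ K ++ v) (winv v ++ gpow Ga s ++ v)).
  { apply beq_app. apply beq_refl. apply beq_app. exact HK. apply beq_refl. }
  split; intros H.
  - assert (H1 : bs_eq l m (winv v ++ gpow Ga s ++ v) (gpow Ga s)) by (eapply beq_trans; [apply beq_sym, E|exact H]).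
    eapply beq_trans. apply (beq_app l m v v _ _ (beq_refl _ _ _) (beq_sym _ _ _ _ H1)).
    rewrite app_assoc. 
    pose proof (beq_app l m _ _ (gpow Ga s ++ v) (gpow Ga s ++ v) (cancel_r l m v) (beq_refl _ _ _)) as H2.
    simpl in H2. exact H2.
  - eapply beq_trans. exact E.
    eapply beq_trans. apply (beq_app l m (winv v) (winv v) _ _ (beq_refl _ _ _) (beq_sym _ _ _ _ H)).
    rewrite app_assoc.
    pose proof (beq_app l m _ _ (gpow Ga s) (gpow Ga s) (cancel_l l m v) (beq_refl _ _ _)) as H2.
    simpl in H2. exact H2.
Qed.

Lemma lam_pow l m n (Hl : l <> 0) (Hm : m <> 0) : 0 <= n ->
  (Qpower (lam l m) n == inject_Z (l ^ n) / inject_Z (m ^ n))%Q.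
Proof.
  intros Hn. unfold lam, Qdiv. rewrite Qmult_power, Qinv_power.
  rewrite !Zpower_Qpower by exact Hn. reflexivity.
Qed.

Lemma injZ_nz z : z <> 0 -> ~ (inject_Z z == 0)%Q.
Proof. intros H E. apply H. apply (proj1 (inject_Z_injective z 0)). exact E. Qed.

Lemma Q_to_Z l m n r s (Hl : l <> 0) (Hm : m <> 0) : 0 <= n ->
  (inject_Z r == Qpower (lam l m) n * inject_Z s)%Q -> r * m ^ n = s * l ^ n.
Proof.
  intros Hn E. rewrite lam_pow in E by auto.
  assert (Hmn : m ^ n <> 0) by (apply Z.pow_nonzero; lia).
  apply inject_Z_injective. rewrite !inject_Z_mult, E. field. apply injZ_nz; auto.
Qed.

Lemma Q_to_Z_neg l m n r s (Hl : l <> 0) (Hm : m <> 0) : 0 <= n ->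
  (inject_Z r == Qpower (lam l m) (- n) * inject_Z s)%Q -> r * l ^ n = s * m ^ n.
Proof.
  intros Hn E. rewrite Qpower_opp, lam_pow in E by auto.
  assert (Hmn : m ^ n <> 0) by (apply Z.pow_nonzero; lia).
  assert (Hln : l ^ n <> 0) by (apply Z.pow_nonzero; lia).
  apply inject_Z_injective. rewrite !inject_Z_mult, E. field.
  split; apply injZ_nz; auto.
Qed.

Theorem proposition1 (l m : Z) (Hlm : Z.abs l > m) (Hm : m > 0)
  (p : Z) (v : word) (Hv : in_L v) (r s : Z) :
  let d := Z.gcd l m in
  let l1 := l / d in
  let m1 := m / d in
  let h := gpow Gb p ++ v in
  bs_eq l m (winv h ++ gpow Ga r ++ h) (gpow Ga s)
  <->
  (in_centralizer l m (gpow Ga s) v /\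
   ((p = 0 /\ r = s) \/
    (p > 0 /\ exists x : Z, r = l1 ^ p * d * x /\ s = m1 ^ p * d * x) \/
    (p < 0 /\ exists x : Z, r = m1 ^ (- p) * d * x /\ s = l1 ^ (- p) * d * x))).
Proof.
  cbv zeta.
  set (d := Z.gcd l m). set (l1 := l / d). set (m1 := m / d).
  assert (Hl0 : l <> 0) by lia.
  assert (Hm0 : m <> 0) by lia.
  assert (Hdpos : 0 < d).
  { pose proof (Z.gcd_nonneg l m). assert (d <> 0); [|lia].
    intros E. apply Hm0. apply (Z.gcd_eq_0_r l m). exact E. }
  assert (Hdl : (d | l)) by apply Z.gcd_divide_l.
  assert (Hdm : (d | m)) by apply Z.gcd_divide_r.
  assert (HL : l = l1 * d).
  { destruct Hdl as [k Hk]. unfold l1. rewrite Hk at 2. rewrite Z.div_mul by lia. exact Hk. }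
  assert (HM : m = m1 * d).
  { destruct Hdm as [k Hk]. unfold m1. rewrite Hk at 2. rewrite Z.div_mul by lia. exact Hk. }
  assert (Hg : Z.gcd l1 m1 = 1) by (apply Z.gcd_div_gcd; [lia|reflexivity]).
  assert (Hl1 : l1 <> 0) by (intros E; rewrite E in HL; lia).
  assert (Hm1 : m1 <> 0) by (intros E; rewrite E in HM; lia).
  assert (Hconj : winv (gpow Gb p ++ v) ++ gpow Ga r ++ gpow Gb p ++ v
                  = winv v ++ (gpow Gb (- p) ++ gpow Ga r ++ gpow Gb p) ++ v).
  { rewrite winv_app, gpow_opp. rewrite <- !app_assoc. reflexivity. }
  rewrite Hconj.
  assert (Kpos : forall x, p > 0 ->
            bs_eq l m (gpow Gb (- p) ++ gpow Ga (l1 ^ p * d * x) ++ gpow Gb p) (gpow Ga (m1 ^ p * d * x))).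
  { intros x Hp. pose proof (bs_iter_pos l m l1 m1 d HL HM (Z.to_nat p) x) as H.
    rewrite Z2Nat.id in H by lia. exact H. }
  assert (Kneg : forall x, p < 0 ->
            bs_eq l m (gpow Gb (- p) ++ gpow Ga (m1 ^ (- p) * d * x) ++ gpow Gb p) (gpow Ga (l1 ^ (- p) * d * x))).
  { intros x Hp. pose proof (bs_iter_neg l m l1 m1 d HL HM (Z.to_nat (- p)) x) as H.
    rewrite Z2Nat.id in H by lia. rewrite Z.opp_involutive in H. exact H. }
  assert (K0 : p = 0 -> bs_eq l m (gpow Gb (- p) ++ gpow Ga r ++ gpow Gb p) (gpow Ga r)).
  { intros ->. simpl. rewrite app_nil_r. apply beq_refl. }
  split.
  - intros H.
    assert (E : bs_eq l m (gpow Ga r ++ gpow Gb p ++ v) ((gpow Gb p ++ v) ++ gpow Ga s)).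
    { set (hh := gpow Gb p ++ v) in *.
      assert (H1 : bs_eq l m (hh ++ winv hh ++ gpow Ga r ++ hh) (hh ++ gpow Ga s)).
      { apply beq_app. apply beq_refl. rewrite <- Hconj in H. exact H. }
      eapply beq_trans; [|exact H1].
      rewrite app_assoc. apply beq_sym.
      pose proof (beq_app l m _ _ (gpow Ga r ++ hh) (gpow Ga r ++ hh) (cancel_r l m hh) (beq_refl _ _ _)) as H2.
      simpl in H2. exact H2. }
    assert (Hb : bexp (gpow Gb p ++ v) = p).
    { rewrite bexp_app, bexp_gpow_b. unfold in_L in Hv. rewrite Hv. ring. }
    pose proof (Q_conj l m Hl0 Hm0 _ r s E) as EQ. rewrite Hb in EQ.
    destruct (Z.lt_trichotomy p 0) as [Hp|[Hp|Hp]].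
    + pose proof (Q_to_Z_neg l m (- p) r s Hl0 Hm0 ltac:(lia)) as Ez.
      rewrite Z.opp_involutive in Ez. specialize (Ez EQ).
      destruct (W_conj l m d Hdl Hdm _ r s ltac:(rewrite Hb; lia) E) as [Hdr Hds].
      destruct (arith m l m1 l1 d (- p) r s ltac:(lia) Hdpos HM HL ltac:(rewrite Z.gcd_comm; exact Hg) Hm1 Ez Hdr Hds)
        as [x [Hx1 Hx2]].
      split.
      * subst r s. apply (proj1 (conj_reduce l m v _ _ (Kneg x ltac:(lia)))). exact H.
      * right; right. split; [lia|]. exists x. split; assumption.
    + subst p. assert (r = s).
      { apply inject_Z_injective. rewrite EQ. simpl. ring. }
      subst s. split.
      * apply (proj1 (conj_reduce l m v _ r (K0 eq_refl))). exact H.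
      * left. split; reflexivity.
    + pose proof (Q_to_Z l m p r s Hl0 Hm0 ltac:(lia) EQ) as Ez.
      destruct (W_conj l m d Hdl Hdm _ r s ltac:(rewrite Hb; lia) E) as [Hdr Hds].
      destruct (arith l m l1 m1 d p r s ltac:(lia) Hdpos HL HM Hg Hl1 Ez Hdr Hds) as [x [Hx1 Hx2]].
      split.
      * subst r s. apply (proj1 (conj_reduce l m v _ _ (Kpos x ltac:(lia)))). exact H.
      * right; left. split; [lia|]. exists x. split; assumption.
  - intros [HC [[Hp Hrs]|[[Hp [x [Hx1 Hx2]]]|[Hp [x [Hx1 Hx2]]]]]].
    + subst s. apply (proj2 (conj_reduce l m v _ r (K0 Hp))). exact HC.
    + subst r s. apply (proj2 (conj_reduce l m v _ _ (Kpos x ltac:(lia)))). exact HC.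
    + subst r s. apply (proj2 (conj_reduce l m v _ _ (Kneg x ltac:(lia)))). exact HC.
Qed.
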